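(* Let $k\geq 3$ be an integer and let $m$ be an odd positive integer such that $m\notin\mathcal F(k)$. Then $k-1\geq 2^{\delta(m)}$, where $\delta(m)=\lceil\log_2(m/3)\rceil$.
   Context: The Thue–Morse word is $\mathbf t=\mathbf t_1\mathbf t_2\cdots$ where $\mathbf t_i\in\{0,1\}$ has the parity of the number of $1$'s in the binary expansion of $i-1$. For positive integers $\alpha\le\beta$, write $\langle\alpha,\beta\rangle=\mathbf t_\alpha\mathbf t_{\alpha+1}\cdots\mathbf t_\beta$. A $k$-anti-power is a word $w_1w_2\cdots w_k$ where $w_1,\dots,w_k$ are pairwise distinct words all of the same length. $\mathcal F(k)$ is the set of odd positive integers $m$ such that the prefix $\langle 1,km\rangle$ of $\mathbf t$ is a $k$-anti-power, i.e. such that the blocks $\langle nm+1,(n+1)m\rangle$, $0\le n\le k-1$, are pairwise distinct. *)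

(* Defs.v *)
From mathcomp Require Import all_boot all_order all_algebra.
Set Implicit Arguments. Unset Strict Implicit. Unset Printing Implicit Defensive.
Import GRing.Theory Num.Theory.

Fixpoint popcount_aux (fuel n : nat) : nat :=
  match fuel with
  | 0 => 0
  | fuel'.+1 => if n is 0 then 0 else odd n + popcount_aux fuel' n./2
  end.
Definition popcount (n : nat) : nat := popcount_aux n n.

(* 0-indexed Thue-Morse: tm i = t_{i+1} = parity of popcount i. *)
Definition tm (i : nat) : bool := odd (popcount i).

(* Block <nm+1,(n+1)m> of t (1-indexed), i.e. 0-indexed positions nm..nm+m-1. *)
Definition tm_block (m n : nat) : seq bool := mkseq (fun j => tm (n * m + j)) m.

Definition inF (k m : nat) : Prop :=
  odd m /\ 0 < m /\ uniq [seq tm_block m n | n <- iota 0 k].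

Lemma deltaN_ex (m : nat) : exists d, m <= 3 * 2 ^ d.
Proof. exists m. apply: leq_trans (ltnW (ltn_expl m (isT : 1 < 2))) _.
  by rewrite leq_pmull. Qed.
Definition deltaN (m : nat) : nat := ex_minn (deltaN_ex m).

(* delta m = ceil(log2(m/3)) = least integer d with m <= 3 * 2^d (for m >= 1).
   For m >= 2 this is nonnegative (3 * 2^-1 < 2), for m = 1 it equals -1. *)
Definition delta (m : nat) : int := if m == 1%N then (-1)%R else Posz (deltaN m).

(* Main.v *)
Require Import Defs.
From mathcomp Require Import all_boot all_order all_algebra.
From mathcomp Require Import zify.
Import Order.TTheory GRing.Theory Num.Theory.

Lemma pa_fuel f1 f2 n : n <= f1 -> n <= f2 -> popcount_aux f1 n = popcount_aux f2 n.
Proof.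
elim: f1 f2 n => [|f1 IH] [|f2] [|n] //= H1 H2.
congr (_ + _); apply: IH.
- have := odd_double_half n.+1; rewrite -muln2; lia.
- have := odd_double_half n.+1; rewrite -muln2; lia.
Qed.

Lemma pc_eq n : 0 < n -> popcount n = odd n + popcount n./2.
Proof.
case: n => [|n] // _.
have -> : popcount n.+1 = odd n.+1 + popcount_aux n n.+1./2 by [].
congr (_ + _); apply: pa_fuel => //.
have := odd_double_half n.+1; rewrite -muln2; lia.
Qed.

Lemma tm2 x : tm (2 * x) = tm x.
Proof.
rewrite /tm; case: x => [|x] //.
rewrite pc_eq; last lia.
by rewrite mul2n doubleK odd_double.
Qed.

Lemma tm21 x : tm (2 * x + 1) = ~~ tm x.
Proof.
rewrite /tm pc_eq; last lia.
have -> : (2 * x + 1)./2 = x by rewrite mul2n addnC (half_bit_double x true).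
by rewrite addn1 /= mul2n odd_double.
Qed.

Lemma nocube x : ~ (tm x = tm (x + 1) /\ tm (x + 1) = tm (x + 2)).
Proof.
move=> [E1 E2]; case/boolP: (odd x) => ox.
- have [r Hr] : exists r, x = 2 * r + 1 by exists x./2; rewrite -{1}(odd_double_half x) ox; lia.
  move: E2; rewrite Hr.
  have -> : 2 * r + 1 + 2 = 2 * (r + 1) + 1 by lia.
  have -> : 2 * r + 1 + 1 = 2 * (r + 1) by lia.
  by rewrite tm2 tm21; case: (tm (r+1)).
- have [r Hr] : exists r, x = 2 * r by exists x./2; rewrite -{1}(odd_double_half x) (negbTE ox); lia.
  move: E1; rewrite Hr tm2 tm21; by case: (tm r).
Qed.

Lemma tm2b x (b : bool) : tm (2 * x + b) = tm x (+) b.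
Proof. by case: b; rewrite ?tm21 ?addn0 ?tm2 ?addbT ?addbF. Qed.

Lemma parity i i' L : 3 < L -> (forall x, x < L -> tm (i + x) = tm (i' + x)) ->
  odd i = odd i'.
Proof.
move=> HL E.
have key : forall p q, (forall x, x < 4 -> tm (2 * p + x) = tm (2 * q + 1 + x)) -> False.
  move=> p q H.
  have h0 := H 0 isT; have h1 := H 1 isT; have h2 := H 2 isT; have h3 := H 3 isT.
  move: h0 h1 h2 h3.
  rewrite !addn0 tm2 tm21.
  have -> : 2 * q + 1 + 1 = 2 * (q + 1) by lia.
  have -> : 2 * p + 2 = 2 * (p + 1) by lia.
  have -> : 2 * q + 1 + 2 = 2 * (q + 1) + 1 by lia.
  have -> : 2 * p + 3 = 2 * (p + 1) + 1 by lia.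
  have -> : 2 * q + 1 + 3 = 2 * (q + 2) by lia.
  rewrite !tm2 !tm21 => h0 h1 h2 h3.
  apply: (nocube q).
  move: h0 h1 h2 h3; case: (tm p); case: (tm q); case: (tm (p+1));
    case: (tm (q+1)); case: (tm (q+2)) => //=.
have [p Hp] : exists p, i = 2 * p + odd i by exists i./2; rewrite -{1}(odd_double_half i); lia.
have [q Hq] : exists q, i' = 2 * q + odd i' by exists i'./2; rewrite -{1}(odd_double_half i'); lia.
case/boolP: (odd i) Hp => oi Hp; case/boolP: (odd i') Hq => oi' Hq //.
- exfalso; apply: (key q p) => x Hx.
  have -> : 2 * q + x = i' + x by rewrite Hq addn0.
  have -> : 2 * p + 1 + x = i + x by rewrite Hp.
  by rewrite E //; lia.
- exfalso; apply: (key p q) => x Hx.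
  have -> : 2 * p + x = i + x by rewrite Hp addn0.
  have -> : 2 * q + 1 + x = i' + x by rewrite Hq.
  by rewrite E //; lia.
Qed.

Lemma synch j : forall i i' L, 3 * 2 ^ j < L ->
  (forall x, x < L -> tm (i + x) = tm (i' + x)) -> i = i' %[mod 2 ^ j.+1].
Proof.
elim: j => [|j IH] i i' L HL E.
  have h2 : 3 < L by move: HL; rewrite expn0; lia.
  by rewrite expn1 !modn2 (parity _ _ _ h2 E).
have h2 : 3 < L by move: HL; rewrite expnS; have := expn_gt0 2 j; lia.
have P := parity _ _ _ h2 E.
set b := odd i.
have [p Hp] : exists p, i = 2 * p + b by exists i./2; rewrite /b -{1}(odd_double_half i); lia.
have [q Hq] : exists q, i' = 2 * q + b by exists i'./2; rewrite /b P -{1}(odd_double_half i'); lia.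
have HL' : 3 * 2 ^ j < uphalf L.
  move: HL; rewrite expnS uphalfE; set t := 2 ^ j; lia.
have E' : forall x, x < uphalf L -> tm (p + x) = tm (q + x).
  move=> x Hx; have Hx2 : 2 * x < L by move: Hx; rewrite uphalfE; lia.
  have := E (2 * x) Hx2.
    have -> : i + 2 * x = 2 * (p + x) + b by rewrite Hp; lia.
    have -> : i' + 2 * x = 2 * (q + x) + b by rewrite Hq; lia.
    rewrite !tm2b.
  by move=> h; have := congr1 (addb^~ b) h; rewrite -!addbA addbb !addbF.
have := IH _ _ _ HL' E'.
rewrite Hp Hq => H.
rewrite expnS; apply/eqP; rewrite eqn_modDr -!muln_modr; apply/eqP; by rewrite H.
Qed.

Lemma blocks_neq m d a b : odd m -> 3 * 2 ^ d < m -> a < b -> b < 2 ^ d.+1 ->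
  tm_block m a <> tm_block m b.
Proof.
move=> om Hm ab bd E.
have E' : forall x, x < m -> tm (a * m + x) = tm (b * m + x).
  move=> x Hx; have := congr1 (fun s => nth false s x) E.
  by rewrite /tm_block !nth_mkseq.
have := synch _ _ _ _ Hm E'.
move/eqP; rewrite eq_sym eqn_mod_dvd; last by rewrite leq_mul2r ltnW ?orbT.
rewrite -mulnBl Gauss_dvdl; last by rewrite coprime_pexpl // coprime_sym coprimen2.
move/dvdn_leq; rewrite subn_gt0 ab => /(_ isT); lia.
Qed.

Local Open Scope ring_scope.

Theorem corollary1 (k m : nat) :
  (3 <= k)%N -> odd m -> (0 < m)%N -> ~ inF k m ->
  (2%:Q) ^ (delta m) <= ((k - 1)%N)%:Q.
Proof.
move=> k3 om m0 nF.
have k1 : 1 <= ((k - 1)%N)%:Q by rewrite ler1n; lia.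
rewrite /delta; case: eqP => [_|m1].
  rewrite exprN1; apply: le_trans k1; rewrite invf_le1; [by [] | by []].

rewrite -exprnP -[2%:Q]/((2%N)%:R) -natrX ler_nat.
rewrite /deltaN; case: ex_minnP => d Hd Hmin.
case: d Hd Hmin => [|j] Hd Hmin.
  rewrite expn0; lia.
rewrite leqNgt; apply/negP => Hk.
 apply: nF; split=> //; split=> //.
rewrite map_inj_in_uniq ?iota_uniq // => a b; rewrite !mem_iota !add0n => ha hb E.
have Hm : (3 * 2 ^ j < m)%N.
  rewrite ltnNge; apply/negP => /Hmin; lia.
case: (ltngtP a b) => // hab; exfalso.
- by apply: (blocks_neq _ _ _ _ om Hm hab _ E); lia.
- by apply: (blocks_neq _ _ _ _ om Hm hab _ (esym E)); lia.
Qed.
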